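(* Let $r\in\mathbb{N}$, let $\mathbf{e}=(e_1,\ldots,e_r)\in\mathbb{Z}^r$, and suppose the Jordan totient quotient $J_{\mathbf e}$ has weight $w=\sum_{i=1}^r ie_i=0$. Then $\mathfrak{S}_{\mathbf e}>0$ and, for $x\ge 2$, \[ \sum_{n\le x}J_{\mathbf e}(n)=\mathfrak{S}_{\mathbf e}\,x+O_{\mathbf e}\big((\log x)^{|e_1|}\big). \]
   Context: Throughout, $p$ denotes a prime. For an integer $k\ge1$, the $k$-th Jordan totient is $J_k(n)=n^k\prod_{p\mid n}(1-p^{-k})$. For $\mathbf e=(e_1,\ldots,e_r)\in\mathbb{Z}^r$ the Jordan totient quotient is $J_{\mathbf e}(n)=\prod_{i=1}^r J_i(n)^{e_i}=n^w\prod_{p\mid n}\prod_{i=1}^r(1-p^{-i})^{e_i}$, where $w=\sum_i ie_i$ is its weight. Define $\mathfrak{S}_{\mathbf e}=\prod_p\left(1+\frac{J_{\mathbf e}(p)p^{-w}-1}{p}\right)$. *)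

(* Defs.v *)
From Stdlib Require Import Reals ZArith Znumtheory Arith List Bool.
Open Scope R_scope.

Definition Rprod (l : list nat) (f : nat -> R) : R :=
  fold_right (fun p acc => f p * acc) 1 l.

Definition isprimeb (p : nat) : bool :=
  if prime_dec (Z.of_nat p) then true else false.

Definition primes_upto (N : nat) : list nat :=
  filter isprimeb (seq 0 (S N)).

Definition prime_divisors (n : nat) : list nat :=
  filter (fun p => isprimeb p && Nat.eqb (n mod p) 0) (seq 0 (S n)).

Definition jordan (k n : nat) : R :=
  INR n ^ k * Rprod (prime_divisors n) (fun p => 1 - / (INR p ^ k)).

Definition ecoef (e : list Z) (i : nat) : Z := nth (i - 1) e 0%Z.

Definition jtq (e : list Z) (n : nat) : R :=
  Rprod (seq 1 (length e)) (fun i => powerRZ (jordan i n) (ecoef e i)).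

Definition weight (e : list Z) : Z :=
  fold_right (fun i acc => (Z.of_nat i * ecoef e i + acc)%Z) 0%Z (seq 1 (length e)).

Definition sing_factor (e : list Z) (p : nat) : R :=
  1 + (jtq e p * powerRZ (INR p) (- weight e) - 1) / INR p.

Definition sing_partial (e : list Z) (N : nat) : R :=
  Rprod (primes_upto N) (sing_factor e).

Definition jtq_sum (e : list Z) (N : nat) : R :=
  fold_right (fun n acc => jtq e n + acc) 0 (seq 1 N).

(* Main.v *)
Require Import Defs.
From Stdlib Require Import Reals ZArith Znumtheory Arith List.
From Stdlib Require Import Lia Lra.
From mathcomp Require Import ssreflect ssrbool ssrfun eqtype ssrnat div prime binomial zify.
Require Import Defs.
Open Scope R_scope.

Notation mprime := prime.prime.

Section NTsec.
Local Open Scope nat_scope.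

Lemma modn_Nat (m d : nat) : m %% d = Nat.modulo m d.
Proof.
case: d => [|d]; first by rewrite modn0 Nat.mod_0_r.
apply: (Nat.mod_unique _ _ (m %/ d.+1)).
  by apply/ltP; rewrite ltn_mod.
by rewrite {1}(divn_eq m d.+1) mulnC.
Qed.

Lemma dvdn_divide (d n : nat) : (d %| n) <-> Nat.divide d n.
Proof.
rewrite /dvdn modn_Nat -Nat.Lcm0.mod_divide.
by split => [/eqP|->].
Qed.

Lemma Zdiv_natdiv (d n : nat) : Z.divide (Z.of_nat d) (Z.of_nat n) -> (0 < n)%coq_nat -> Nat.divide d n.
Proof.
move=> [z Hz] Hn.
have Hz0 : (0 <= z)%Z by nia.
exists (Z.to_nat z). apply Nat2Z.inj. rewrite Nat2Z.inj_mul Z2Nat.id //.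
Qed.

Lemma isprimeb_mc (p : nat) : isprimeb p = mprime p.
Proof.
rewrite /isprimeb. case: (prime_dec (Z.of_nat p)) => H.
- symmetry. apply/primeP. move/prime_alt: H => [H1 H2]. split.
    apply/ltP; lia.
  move=> d /dvdn_divide Hd.
  have Hd' : Nat.divide d p by [].
  case: Hd => k Hk.
  have dle : (d <= p)%coq_nat.
    destruct k; simpl in Hk; lia.
  have d0 : d <> 0%nat by move=> E; subst; lia.
  case E1: (d == 1%nat) => //=. move/eqP: E1 => E1.
  apply/eqP. case: (Nat.eq_dec d p) => // Hne. exfalso.
  apply: (H2 (Z.of_nat d)); first lia.
  exists (Z.of_nat k). by rewrite Hk Nat2Z.inj_mul.
- symmetry. apply/negP => Hp. apply: H. apply/prime_alt. split.
    have := prime_gt1 Hp => /ltP; lia.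
  move=> n Hn Hdiv.
  have Hn' : n = Z.of_nat (Z.to_nat n) by lia.
  rewrite Hn' in Hdiv.
  have pg := prime_gt1 Hp. move/ltP in pg.
  have := Zdiv_natdiv _ _ Hdiv ltac:(lia).
  move/dvdn_divide. move/primeP: Hp => [_ Hp] /Hp /orP [/eqP|/eqP]; lia.
Qed.

Lemma pr_mc p : isprimeb p = true -> mprime p.
Proof. by rewrite isprimeb_mc. Qed.

Lemma dvd_mul_coprime (p d n : nat) : mprime p -> ~~ (p %| d) -> p %| n -> d %| n -> p * d %| n.
Proof. move=> pp nd h1 h2. by rewrite Gauss_dvd ?prime_coprime // h1 h2. Qed.

Lemma dvd_prime_mul (q p d : nat) : mprime q -> mprime p -> q <> p -> q %| p * d -> q %| d.
Proof.
move=> qp pp ne. rewrite Euclid_dvdM // => /orP [|//].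
by rewrite dvdn_prime2 // => /eqP.
Qed.

Lemma not_dvd_prod (q : nat) (l : list nat) : mprime q -> Forall (fun p => isprimeb p = true) l ->
  ~ In q l -> ~~ (q %| fold_right Nat.mul 1%nat l).
Proof.
move=> qp; elim: l => [|p l IH] /= Hall Hin.
  by rewrite Euclid_dvd1.
inversion Hall; subst.
apply/negP => H. have := dvd_prime_mul _ _ _ qp (pr_mc _ H1) ltac:(move=> E; apply: Hin; left; auto) H.
apply/negP. apply: IH => //. move=> I; apply: Hin; right; auto.
Qed.

Lemma dvd_prod (K : nat) (l : list nat) : NoDup l -> Forall (fun p => isprimeb p = true) l ->
  Forall (fun p => p %| K) l -> fold_right Nat.mul 1%nat l %| K.
Proof.
elim: l => [|p l IH] /= Hnd Hall Hd; first by rewrite dvd1n.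
inversion Hnd; inversion Hall; inversion Hd; subst.
apply: dvd_mul_coprime => //; first exact: pr_mc.
  exact: not_dvd_prod (pr_mc _ _) _ _.
by apply: IH.
Qed.

Lemma bin_le_pow2 n m : 'C(n, m) <= 2 ^ n.
Proof.
elim: n m => [|n IH] [|m] //.
all: try by rewrite bin0 expn_gt0.
rewrite binS expnS mulSn mul1n. apply: leq_add; exact: IH.
Qed.

Lemma prime_not_dvd_fact p m : mprime p -> m < p -> ~~ (p %| m`!).
Proof.
move=> pp. elim: m => [|m IH] lt.
  by rewrite fact0 Euclid_dvd1.
rewrite factS Euclid_dvdM // negb_or IH ?andbT; last by apply: ltnW.
apply/negP => /dvdn_leq. rewrite ltn0Sn => /(_ isT). by rewrite leqNgt lt.
Qed.

Lemma prime_dvd_central_bin p m : mprime p -> m < p -> p <= m + m -> p %| 'C(m + m, m).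
Proof.
move=> pp lt le.
have H := bin_fact (leq_addr m m : m <= m + m).
have : p %| (m + m)`!. apply: dvdn_fact. by rewrite prime_gt0.
rewrite -H addnK !Euclid_dvdM // (negbTE (prime_not_dvd_fact _ _ pp lt)) /=.
by rewrite orbF.
Qed.

Lemma central_bin_le m : 'C(m + m, m) <= 4 ^ m.
Proof. have -> : 4 ^ m = 2 ^ (m + m) by rewrite expnD -expnMn. apply: bin_le_pow2. Qed.

End NTsec.

Definition Rsum {A} (l : list A) (f : A -> R) : R :=
  fold_right (fun a acc => f a + acc) 0 l.

Lemma Rsum_app {A} (l1 l2 : list A) f : Rsum (l1 ++ l2) f = Rsum l1 f + Rsum l2 f.
Proof. induction l1 as [|a l IH]; simpl; [lra|]. unfold Rsum in *; simpl; rewrite IH; ring. Qed.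

Lemma Rprod_app (l1 l2 : list nat) f : Rprod (l1 ++ l2) f = Rprod l1 f * Rprod l2 f.
Proof. induction l1 as [|a l IH]; simpl; [unfold Rprod; simpl; ring|]. unfold Rprod in *; simpl; rewrite IH; ring. Qed.

Lemma Rsum_map {A B} (l : list A) (h : A -> B) f : Rsum (map h l) f = Rsum l (fun a => f (h a)).
Proof. induction l as [|a l IH]; [reflexivity|]. unfold Rsum in *; simpl; rewrite IH; ring. Qed.

Lemma Rsum_ext {A} (l : list A) f g : (forall a, In a l -> f a = g a) -> Rsum l f = Rsum l g.
Proof.
induction l as [|a l IH]; intros H; [reflexivity|]. unfold Rsum in *; simpl.
f_equal; [apply H; left; auto| apply IH; intros; apply H; right; auto].
Qed.

Lemma Rprod_ext (l : list nat) f g : (forall a, In a l -> f a = g a) -> Rprod l f = Rprod l g.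
Proof.
induction l as [|a l IH]; intros H; [reflexivity|]. unfold Rprod in *; simpl.
f_equal; [apply H; left; auto| apply IH; intros; apply H; right; auto].
Qed.

Lemma Rsum_le {A} (l : list A) f g : (forall a, In a l -> f a <= g a) -> Rsum l f <= Rsum l g.
Proof.
induction l as [|a l IH]; intros H; [unfold Rsum; simpl; lra|]. unfold Rsum in *; simpl.
assert (f a <= g a) by (apply H; left; auto).
assert (fold_right (fun a acc => f a + acc) 0 l <= fold_right (fun a acc => g a + acc) 0 l)
  by (apply IH; intros; apply H; right; auto). lra.
Qed.

Lemma Rsum_plus {A} (l : list A) f g : Rsum l (fun a => f a + g a) = Rsum l f + Rsum l g.
Proof. induction l as [|a l IH]; unfold Rsum in *; simpl; [lra|]. rewrite IH; ring. Qed.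

Lemma Rsum_scal {A} (l : list A) c f : Rsum l (fun a => c * f a) = c * Rsum l f.
Proof. induction l as [|a l IH]; unfold Rsum in *; simpl; [lra|]. rewrite IH; ring. Qed.

Lemma Rsum_0 {A} (l : list A) : Rsum l (fun _ => 0) = 0.
Proof. induction l as [|a l IH]; unfold Rsum in *; simpl; [lra|]. rewrite IH; ring. Qed.

Lemma Rsum_swap {A B} (l1 : list A) (l2 : list B) h :
  Rsum l1 (fun a => Rsum l2 (h a)) = Rsum l2 (fun b => Rsum l1 (fun a => h a b)).
Proof.
induction l1 as [|a l IH].
- unfold Rsum at 1; simpl. symmetry. apply (Rsum_0 l2).
- change (Rsum (a :: l) (fun a0 => Rsum l2 (h a0))) with (Rsum l2 (h a) + Rsum l (fun a0 => Rsum l2 (h a0))).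
  rewrite IH. rewrite <- Rsum_plus. apply Rsum_ext. intros; reflexivity.
Qed.

Lemma Rsum_abs {A} (l : list A) f : Rabs (Rsum l f) <= Rsum l (fun a => Rabs (f a)).
Proof.
induction l as [|a l IH]; unfold Rsum in *; simpl.
- rewrite Rabs_R0; lra.
- eapply Rle_trans; [apply Rabs_triang|]. lra.
Qed.

Lemma Rsum_nonneg {A} (l : list A) f : (forall a, In a l -> 0 <= f a) -> 0 <= Rsum l f.
Proof. intros H. rewrite <- (Rsum_0 l). apply Rsum_le. auto. Qed.

Lemma Rsum_filter_le {A} (P : A -> bool) (l : list A) f : (forall a, In a l -> 0 <= f a) ->
  Rsum (filter P l) f <= Rsum l f.
Proof.
induction l as [|a l IH]; intros H; simpl; [unfold Rsum; simpl; lra|].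
assert (0 <= f a) by (apply H; left; auto).
assert (Rsum (filter P l) f <= Rsum l f) by (apply IH; intros; apply H; right; auto).
destruct (P a); unfold Rsum in *; simpl; lra.
Qed.

Lemma Rsum_filter (P : nat -> bool) (l : list nat) f :
  Rsum (filter P l) f = Rsum l (fun a => if P a then f a else 0).
Proof. induction l as [|a l IH]; simpl; [reflexivity|]. destruct (P a); unfold Rsum in *; simpl; rewrite IH; ring. Qed.

Lemma Rprod_filter (P : nat -> bool) (l : list nat) f :
  Rprod (filter P l) f = Rprod l (fun a => if P a then f a else 1).
Proof. induction l as [|a l IH]; simpl; [reflexivity|]. destruct (P a); unfold Rprod in *; simpl; rewrite IH; ring. Qed.

Lemma Rprod_mult (l : list nat) f g : Rprod l (fun a => f a * g a) = Rprod l f * Rprod l g.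
Proof. induction l as [|a l IH]; unfold Rprod in *; simpl; [ring|]. rewrite IH; ring. Qed.

Lemma Rprod_1 (l : list nat) : Rprod l (fun _ => 1) = 1.
Proof. induction l as [|a l IH]; unfold Rprod in *; simpl; [ring|]. rewrite IH; ring. Qed.

Lemma Rprod_swap (l1 l2 : list nat) h :
  Rprod l1 (fun a => Rprod l2 (h a)) = Rprod l2 (fun b => Rprod l1 (fun a => h a b)).
Proof.
induction l1 as [|a l IH].
- unfold Rprod at 1; simpl. symmetry. apply (Rprod_1 l2).
- change (Rprod (a :: l) (fun a0 => Rprod l2 (h a0))) with (Rprod l2 (h a) * Rprod l (fun a0 => Rprod l2 (h a0))).
  rewrite IH. rewrite <- Rprod_mult. apply Rprod_ext. intros; reflexivity.
Qed.

Lemma Rprod_powerRZ (l : list nat) f z : powerRZ (Rprod l f) z = Rprod l (fun a => powerRZ (f a) z).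
Proof. induction l as [|a l IH]; unfold Rprod in *; simpl; [apply powerRZ_R1|]. rewrite powerRZ_mult IH; ring. Qed.

Lemma Rprod_pos (l : list nat) f : (forall a, In a l -> 0 < f a) -> 0 < Rprod l f.
Proof.
induction l as [|a l IH]; intros H; unfold Rprod in *; simpl; [lra|].
apply Rmult_lt_0_compat; [apply H; left; auto| apply IH; intros; apply H; right; auto].
Qed.

Lemma Rprod_le (l : list nat) f g : (forall a, In a l -> 0 <= f a <= g a) -> Rprod l f <= Rprod l g.
Proof.
assert (Hnn : forall l f, (forall a, In a l -> 0 <= f a) -> 0 <= Rprod l f).
{ clear. induction l as [|a l IH]; intros f H; unfold Rprod in *; simpl; [lra|].
  apply Rmult_le_pos; [apply H; left; auto| apply IH; intros; apply H; right; auto]. }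
induction l as [|a l IH]; intros H; unfold Rprod in *; simpl; [lra|].
apply Rmult_le_compat.
- apply H; left; auto.
- apply (Hnn l f). intros; apply H; right; auto.
- apply H; left; auto.
- apply IH; intros; apply H; right; auto.
Qed.

Lemma Rprod_exp (l : list nat) h : Rprod l (fun a => exp (h a)) = exp (Rsum l h).
Proof.
induction l as [|a l IH]; unfold Rprod, Rsum in *; simpl; [rewrite exp_0; ring|].
rewrite IH exp_plus; ring.
Qed.

Lemma Rprod_Rpower (l : list nat) x h : 0 < x -> Rprod l (fun a => Rpower x (h a)) = Rpower x (Rsum l h).
Proof.
intros Hx. induction l as [|a l IH]; unfold Rprod, Rsum in *; simpl; [rewrite Rpower_O; auto|].
rewrite IH Rpower_plus; ring.
Qed.

Lemma Rprod_dev (l : list nat) x :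
  Rabs (Rprod l (fun a => 1 + x a) - 1) <= Rprod l (fun a => 1 + Rabs (x a)) - 1.
Proof.
induction l as [|a l IH]; unfold Rprod in *; simpl.
- replace (1 - 1) with 0 by ring. rewrite Rabs_R0; lra.
- set (P := fold_right (fun p acc => (1 + x p) * acc) 1 l) in *.
  set (Q := fold_right (fun p acc => (1 + Rabs (x p)) * acc) 1 l) in *.
  replace ((1 + x a) * P - 1) with (x a * P + (P - 1)) by ring.
  assert (HP : Rabs P <= Q).
  { replace P with ((P - 1) + 1) by ring. eapply Rle_trans; [apply Rabs_triang|]. rewrite Rabs_R1. lra. }
  eapply Rle_trans; [apply Rabs_triang|]. rewrite Rabs_mult.
  assert (Rabs (x a) * Rabs P <= Rabs (x a) * Q) by (apply Rmult_le_compat_l; [apply Rabs_pos|auto]).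
  lra.
Qed.

Lemma modb_dvdn (n d : nat) : Nat.eqb (Nat.modulo (n) d) 0 = (d %| n).
Proof. rewrite /dvdn modn_Nat. by case: Nat.eqb_spec => [->|/eqP /negbTE ->]. Qed.

Lemma prime_ge2 (p : nat) : isprimeb p = true -> (2 <= p)%coq_nat.
Proof. move/pr_mc/prime_gt1/ltP. lia. Qed.

Lemma In_primes_upto p N : In p (primes_upto N) <-> isprimeb p = true /\ (p <= N)%coq_nat.
Proof. unfold primes_upto. rewrite filter_In in_seq. split; intros [H1 H2]; split; auto; lia. Qed.

Lemma NoDup_primes_upto N : NoDup (primes_upto N).
Proof. apply NoDup_filter, seq_NoDup. Qed.

Lemma filter_nil_all {A} (P : A -> bool) l : (forall a, In a l -> P a = false) -> filter P l = nil.
Proof.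
induction l as [|a l IH]; simpl; intros H; auto.
rewrite (H a (or_introl erefl)). apply IH; intros; apply H; right; auto.
Qed.

Lemma filter_filter' {A} (P Q : A -> bool) l : filter Q (filter P l) = filter (fun a => P a && Q a) l.
Proof. induction l as [|a l IH]; simpl; auto. destruct (P a); simpl; auto. destruct (Q a); simpl; rewrite IH; auto. Qed.

Lemma prime_divisors_filter (n N : nat) : (1 <= n)%coq_nat -> (n <= N)%coq_nat ->
  prime_divisors n = filter (fun p => Nat.eqb (Nat.modulo (n) p) 0) (primes_upto N).
Proof.
intros H1 H2. unfold prime_divisors, primes_upto. rewrite filter_filter'.
replace (S N) with (Nat.add (S n) (Nat.sub N n)) by lia. rewrite seq_app filter_app.
rewrite [X in _ ++ X]filter_nil_all.
- rewrite app_nil_r. reflexivity.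
- intros a Ha. apply in_seq in Ha. rewrite Nat.mod_small; [|lia].
  destruct (isprimeb a); simpl; auto. apply Nat.eqb_neq. lia.
Qed.

Lemma prime_divisors_prime p : isprimeb p = true -> prime_divisors p = p :: nil.
Proof.
intros Hp. unfold prime_divisors. rewrite seq_S filter_app.
rewrite [X in X ++ _]filter_nil_all.
- simpl. rewrite Hp. simpl. rewrite Nat.mod_same; [reflexivity|have := prime_ge2 _ Hp; lia].
- intros q Hq. apply in_seq in Hq. case Eq: (isprimeb q); simpl; auto.
  rewrite modb_dvdn. apply/negP => Hd.
  have := pr_mc _ Hp. move/primeP => [_ /(_ q Hd) /orP [/eqP E|/eqP E]].
  + subst q. have := prime_ge2 _ Eq. lia.
  + lia.
Qed.

Lemma primes_upto_split (N M : nat) : (N <= M)%coq_nat ->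
  primes_upto M = primes_upto N ++ filter isprimeb (List.seq (S N) (M - N)).
Proof.
intros H. unfold primes_upto. replace (S M) with (Nat.add (S N) (Nat.sub M N)) by lia.
rewrite seq_app filter_app. reflexivity.
Qed.

Definition cntm (d N : nat) : nat := length (filter (fun n => Nat.eqb (Nat.modulo (n) d) 0) (List.seq 1 N)).

Lemma cntm_bound (d N : nat) : (1 <= d)%coq_nat -> (Nat.mul d (cntm d N) <= N)%coq_nat /\ (N < Nat.mul d (Nat.add (cntm d N) 1))%coq_nat.
Proof.
intros Hd. induction N as [|N IH].
- unfold cntm; simpl. lia.
- unfold cntm in *. rewrite seq_S filter_app length_app. simpl.
  case E: (Nat.eqb (Nat.modulo (1 + N) d) 0); simpl.
  + apply Nat.eqb_eq in E. apply Nat.Lcm0.mod_divide in E. destruct E as [m Hm].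
    set (c := length _) in *.
    assert (c < m)%coq_nat by nia. assert (m <= Nat.add c 1)%coq_nat by nia.
    assert (m = Nat.add c 1) by lia. subst m. nia.
  + set (c := length _) in *. apply Nat.eqb_neq in E.
    assert (Nat.add 1 N <> Nat.mul d (Nat.add c 1)).
    { intros E2. apply E. have -> : (1 + N)%N = Nat.mul d (Nat.add c 1) by lia. rewrite Nat.mul_comm Nat.Div0.mod_mul. reflexivity. }
    lia.
Qed.

Lemma Rsum_const {A} (l : list A) (w : R) : Rsum l (fun _ => w) = w * INR (length l).
Proof. induction l as [|a l IH]; unfold Rsum in *; cbn [fold_right length]; [simpl; ring|]. rewrite IH S_INR. ring. Qed.

Lemma Rsum_cnt d N (w : R) :
  Rsum (List.seq 1 N) (fun n => if Nat.eqb (Nat.modulo (n) d) 0 then w else 0) = w * INR (cntm d N).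
Proof.
unfold cntm. rewrite <- Rsum_const. rewrite (Rsum_filter (fun n => Nat.eqb (Nat.modulo n d) 0) _ (fun _ => w)).
reflexivity.
Qed.

Lemma cntm_real (d N : nat) : (1 <= d)%coq_nat ->
  INR N / INR d - 1 < INR (cntm d N) <= INR N / INR d.
Proof.
intros Hd. destruct (cntm_bound d N Hd) as [H1 H2].
apply le_INR in H1. apply lt_INR in H2. rewrite mult_INR in H1. rewrite mult_INR plus_INR in H2. simpl in H2.
assert (0 < INR d) by (apply lt_0_INR; lia).
split.
- apply (Rmult_lt_reg_l (INR d)); auto. field_simplify; lra.
- apply (Rmult_le_reg_l (INR d)); auto. field_simplify; lra.
Qed.

Fixpoint subs (g : nat -> R) (L : list nat) : list (nat * R) :=
  match L with
  | nil => (1%nat, 1) :: nil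
  | p :: L' => subs g L' ++ map (fun dw => (Nat.mul p (fst dw), g p * snd dw)) (subs g L')
  end.

Definition primelist (L : list nat) := Forall (fun p => isprimeb p = true) L.

Lemma subs_pos g L : primelist L -> forall dw, In dw (subs g L) -> (1 <= fst dw)%coq_nat.
Proof.
induction L as [|p L IH]; simpl; intros HL dw Hin.
- destruct Hin as [<-|[]]; simpl; lia.
- inversion HL; subst. apply in_app_or in Hin. destruct Hin as [Hin|Hin]; [apply IH; auto|].
  apply in_map_iff in Hin. destruct Hin as [dw' [<- Hin]]. simpl.
  have := IH H2 dw' Hin. have := prime_ge2 _ H1. nia.
Qed.

Lemma subs_ndvd g L : primelist L -> forall dw, In dw (subs g L) ->
  forall q, isprimeb q = true -> ~ In q L -> ~~ (q %| fst dw).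
Proof.
induction L as [|p L IH]; simpl; intros HL dw Hin q Hq HqL.
- destruct Hin as [<-|[]]; simpl. by rewrite Euclid_dvd1 // pr_mc.
- inversion HL; subst. apply in_app_or in Hin. destruct Hin as [Hin|Hin].
  + apply: IH => //. auto.
  + apply in_map_iff in Hin. destruct Hin as [dw' [<- Hin]]. simpl.
    apply/negP => Hd. have := dvd_prime_mul q p (fst dw') (pr_mc _ Hq) (pr_mc _ H1) ltac:(auto) Hd.
    apply/negP. apply: IH => //. auto.
Qed.

Lemma dvd_mul_iff p d n : isprimeb p = true -> ~~ (p %| d) ->
  (Nat.mul p d %| n) = (p %| n) && (d %| n).
Proof.
move=> Hp Hd. change (Nat.mul p d) with (p * d)%N. rewrite Gauss_dvd // prime_coprime //. exact: pr_mc.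
Qed.

Lemma subs_expand g L n : primelist L -> NoDup L ->
  Rprod L (fun p => if Nat.eqb (Nat.modulo n p) 0 then 1 + g p else 1) =
  Rsum (subs g L) (fun dw => if Nat.eqb (Nat.modulo n (fst dw)) 0 then snd dw else 0).
Proof.
induction L as [|p L IH]; intros HL HN.
- unfold Rprod, Rsum; cbn [subs fold_right fst snd]. rewrite (Nat.mod_1_r n) /=. ring.
- inversion HL; subst. inversion HN; subst.
  change (Rprod (p :: L) ?f) with (f p * Rprod L f).
  simpl subs. rewrite Rsum_app Rsum_map IH //. simpl.
  case E: (Nat.eqb (Nat.modulo n p) 0).
  + rewrite (Rsum_ext _ (fun a => if Nat.eqb (Nat.modulo n (Nat.mul p (fst a))) 0 then g p * snd a else 0)
      (fun a => g p * (if Nat.eqb (Nat.modulo n (fst a)) 0 then snd a else 0))).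
    * rewrite Rsum_scal. ring.
    * intros dw Hin. rewrite !modb_dvdn dvd_mul_iff //.
      -- rewrite -modb_dvdn E /=. case: (fst dw %| n); ring.
      -- apply: (subs_ndvd g L) => //.
  + rewrite (Rsum_ext _ (fun a => if Nat.eqb (Nat.modulo n (Nat.mul p (fst a))) 0 then g p * snd a else 0)
      (fun a => 0)).
    * rewrite Rsum_0. ring.
    * intros dw Hin. rewrite !modb_dvdn dvd_mul_iff //.
      -- rewrite -modb_dvdn E /=. reflexivity.
      -- apply: (subs_ndvd g L) => //.
Qed.

Lemma subs_div g L : primelist L ->
  Rsum (subs g L) (fun dw => snd dw / INR (fst dw)) = Rprod L (fun p => 1 + g p / INR p).
Proof.
induction L as [|p L IH]; intros HL.
- unfold Rprod, Rsum; simpl. field.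
- inversion HL; subst.
  change (Rprod (p :: L) ?f) with (f p * Rprod L f).
  simpl subs. rewrite Rsum_app Rsum_map -IH //. simpl.
  rewrite (Rsum_ext _ (fun a => g p * snd a / INR (Nat.mul p (fst a))) (fun a => (g p / INR p) * (snd a / INR (fst a)))).
  + rewrite Rsum_scal. ring.
  + intros dw Hin. rewrite mult_INR.
    have := subs_pos g L H2 dw Hin. have := prime_ge2 p H1. intros h1 h2.
    have : INR p <> 0 by apply not_0_INR; lia.
    have : INR (fst dw) <> 0 by apply not_0_INR; lia.
    intros; field; auto.
Qed.

Lemma subs_abs g L :
  Rsum (subs g L) (fun dw => Rabs (snd dw)) = Rprod L (fun p => 1 + Rabs (g p)).
Proof.
induction L as [|p L IH].
- unfold Rprod, Rsum; simpl. rewrite Rabs_R1. ring.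
- change (Rprod (p :: L) ?f) with (f p * Rprod L f).
  simpl subs. rewrite Rsum_app Rsum_map -IH. simpl.
  rewrite (Rsum_ext _ (fun a => Rabs (g p * snd a)) (fun a => Rabs (g p) * Rabs (snd a))).
  + rewrite Rsum_scal. ring.
  + intros; apply Rabs_mult.
Qed.

Definition Fe (e : list Z) (u : R) : R :=
  Rprod (List.seq 1 (length e)) (fun i => powerRZ (1 - u ^ i) (ecoef e i)).
Definition fe (e : list Z) (p : nat) : R := Fe e (/ INR p).
Definition ge (e : list Z) (p : nat) : R := fe e p - 1.

Lemma weight_IZR e : IZR (weight e) = Rsum (List.seq 1 (length e)) (fun i => INR i * IZR (ecoef e i)).
Proof.
unfold weight. induction (List.seq 1 (length e)) as [|a l IH]; unfold Rsum in *; simpl; auto.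
rewrite plus_IZR mult_IZR IH -INR_IZR_INZ. reflexivity.
Qed.

Lemma powerRZ_pow_Rpower x i z : 0 < x -> powerRZ (x ^ i) z = Rpower x (INR i * IZR z).
Proof.
intros Hx. rewrite powerRZ_Rpower; [|apply pow_lt; auto]. unfold Rpower. rewrite ln_pow //. f_equal. ring.
Qed.

Lemma jtq_eq e n : weight e = 0%Z -> (1 <= n)%coq_nat -> jtq e n = Rprod (prime_divisors n) (fe e).
Proof.
intros Hw Hn. unfold jtq, jordan.
rewrite (Rprod_ext _ _ (fun i => powerRZ (INR n ^ i) (ecoef e i) *
   Rprod (prime_divisors n) (fun p => powerRZ (1 - / INR p ^ i) (ecoef e i)))).
- rewrite Rprod_mult Rprod_swap.
  have Hn' : 0 < INR n by apply lt_0_INR; lia.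
  rewrite (Rprod_ext _ _ (fun i => Rpower (INR n) (INR i * IZR (ecoef e i)))).
  + rewrite Rprod_Rpower // -weight_IZR Hw Rpower_O // Rmult_1_l.
    apply Rprod_ext. intros p _. unfold fe, Fe. apply Rprod_ext. intros i _. rewrite pow_inv. reflexivity.
  + intros i _. apply powerRZ_pow_Rpower; auto.
- intros i _. rewrite powerRZ_mult Rprod_powerRZ. reflexivity.
Qed.

Lemma sing_factor_eq e p : weight e = 0%Z -> isprimeb p = true -> sing_factor e p = 1 + ge e p / INR p.
Proof.
intros Hw Hp. unfold sing_factor, ge. rewrite Hw. simpl Z.opp. rewrite powerRZ_O Rmult_1_r.
rewrite jtq_eq //; [|have := prime_ge2 _ Hp; lia].
rewrite prime_divisors_prime //. unfold Rprod; simpl. rewrite Rmult_1_r. reflexivity.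
Qed.

Lemma pow_le_one u n : 0 <= u <= 1 -> u ^ n <= 1.
Proof.
intros Hu. induction n as [|n IH]; simpl; [lra|].
have : 0 <= u ^ n by apply pow_le; lra. nra.
Qed.

Lemma Fe_pos e u : 0 < u < 1 -> 0 < Fe e u.
Proof.
intros Hu. unfold Fe. apply Rprod_pos. intros i Hi. apply in_seq in Hi. apply powerRZ_lt.
have : u ^ i <= u.
{ destruct i as [|i]; [lia|]. simpl. have : u ^ i <= 1 by apply pow_le_one; lra. nra. }
lra.
Qed.

Lemma fe_pos e p : (2 <= p)%coq_nat -> 0 < fe e p.
Proof.
intros Hp. apply Fe_pos. have : 2 <= INR p by (replace 2 with (INR 2) by (simpl; ring); apply le_INR; lia).
intros H. split; [apply Rinv_0_lt_compat; lra|]. rewrite <- Rinv_1. apply Rinv_lt_contravar; lra.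
Qed.

Definition good (a : R) (h : R -> R) :=
  exists D, 0 <= D /\ forall u, 0 < u <= / 2 -> Rabs (h u - 1 - a * u) <= D * u ^ 2.

Lemma good_ext a a' h h' : a = a' -> (forall u, 0 < u <= /2 -> h u = h' u) -> good a h -> good a' h'.
Proof.
intros -> Hh [D [HD H]]. exists D. split; auto. intros u Hu. rewrite <- Hh; auto.
Qed.

Lemma good_1 : good 0 (fun _ => 1).
Proof. exists 0. split; [lra|]. intros u Hu. replace (1 - 1 - 0 * u) with 0 by ring. rewrite Rabs_R0. lra. Qed.

Lemma good_mul a b h1 h2 : good a h1 -> good b h2 -> good (a + b) (fun u => h1 u * h2 u).
Proof.
intros [D1 [HD1 H1]] [D2 [HD2 H2]].
exists (Rabs a * Rabs b + D1 * (1 + Rabs b / 2 + D2 / 4) + D2 * (1 + Rabs a / 2)).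
split.
{ have := Rabs_pos a. have := Rabs_pos b. intros. apply Rplus_le_le_0_compat; [apply Rplus_le_le_0_compat|].
  - nra.
  - apply Rmult_le_pos; auto. lra.
  - apply Rmult_le_pos; auto. lra. }
intros u Hu. have E1 := H1 u Hu. have E2 := H2 u Hu.
set (e1 := h1 u - 1 - a * u) in *. set (e2 := h2 u - 1 - b * u) in *.
replace (h1 u * h2 u - 1 - (a + b) * u) with (e1 * h2 u + e2 * (1 + a * u) + a * b * u ^ 2)
  by (unfold e1, e2; ring).
have Hu2 : u ^ 2 <= / 4 by (simpl; nra).
have Hu2p : 0 <= u ^ 2 by (simpl; nra).
have M2 : Rabs (h2 u) <= 1 + Rabs b / 2 + D2 / 4.
{ replace (h2 u) with (1 + b * u + e2) by (unfold e2; ring).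
  eapply Rle_trans; [apply Rabs_triang|]. eapply Rle_trans; [apply Rplus_le_compat_r; apply Rabs_triang|].
  rewrite Rabs_R1 Rabs_mult (Rabs_right u); last lra.
  have : Rabs b * u <= Rabs b / 2 by (have := Rabs_pos b; nra).
  have : D2 * u ^ 2 <= D2 / 4 by nra. lra. }
have M1 : Rabs (1 + a * u) <= 1 + Rabs a / 2.
{ eapply Rle_trans; [apply Rabs_triang|]. rewrite Rabs_R1 Rabs_mult (Rabs_right u); last lra.
  have := Rabs_pos a; nra. }
eapply Rle_trans; [apply Rabs_triang|]. eapply Rle_trans; [apply Rplus_le_compat_r; apply Rabs_triang|].
rewrite !Rabs_mult. rewrite Rabs_R1 (Rabs_right u); last lra. replace (u * (u * 1)) with (u ^ 2) by (simpl; ring).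
have T1 : Rabs e1 * Rabs (h2 u) <= (D1 * u ^ 2) * (1 + Rabs b / 2 + D2 / 4)
  by (apply Rmult_le_compat; auto; apply Rabs_pos).
have T2 : Rabs e2 * Rabs (1 + a * u) <= (D2 * u ^ 2) * (1 + Rabs a / 2)
  by (apply Rmult_le_compat; auto; apply Rabs_pos).
lra.
Qed.

Lemma good_pow a h n : good a h -> good (INR n * a) (fun u => h u ^ n).
Proof.
intros G. induction n as [|n IH].
- eapply good_ext; [| |apply good_1]; simpl; intros; ring.
- eapply good_ext; [| |apply (good_mul _ _ _ _ G IH)]; [rewrite S_INR; ring|]. intros; simpl; ring.
Qed.

Definition cc (i : nat) : R := if Nat.eqb i 1 then -1 else 0.

Lemma pow_le_sq u i : 0 <= u <= 1 -> (2 <= i)%coq_nat -> u ^ i <= u ^ 2.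
Proof.
intros Hu Hi. replace i with (Nat.add 2 (Nat.sub i 2)) by lia. rewrite pow_add.
have : u ^ (Nat.sub i 2) <= 1 by apply pow_le_one; lra.
have : 0 <= u ^ 2 by apply pow_le; lra. nra.
Qed.

Lemma good_base i : (1 <= i)%coq_nat -> good (cc i) (fun u => 1 - u ^ i).
Proof.
intros Hi. unfold cc. case E: (Nat.eqb i 1).
- apply Nat.eqb_eq in E. subst. exists 0. split; [lra|]. intros u Hu.
  replace (1 - u ^ 1 - 1 - -1 * u) with 0 by ring. rewrite Rabs_R0. simpl; nra.
- apply Nat.eqb_neq in E. exists 1. split; [lra|]. intros u Hu.
  replace (1 - u ^ i - 1 - 0 * u) with (- u ^ i) by ring. rewrite Rabs_Ropp Rabs_right.
  + rewrite Rmult_1_l. apply pow_le_sq; [lra|lia].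
  + apply Rle_ge, pow_le; lra.
Qed.

Lemma good_base_inv i : (1 <= i)%coq_nat -> good (- cc i) (fun u => / (1 - u ^ i)).
Proof.
intros Hi. unfold cc. case E: (Nat.eqb i 1).
- apply Nat.eqb_eq in E. subst. exists 2. split; [lra|]. intros u Hu.
  replace (/ (1 - u ^ 1) - 1 - - -1 * u) with (u ^ 2 / (1 - u)) by (simpl; field; lra).
  rewrite Rabs_right.
  + unfold Rdiv. have : / (1 - u) <= 2.
    { replace 2 with (/ / 2) by (field). apply Rinv_le_contravar; lra. }
    have : 0 <= u ^ 2 by (simpl; nra). nra.
  + apply Rle_ge. apply Rmult_le_pos; [simpl; nra| apply Rlt_le, Rinv_0_lt_compat; lra].
- apply Nat.eqb_neq in E. exists 2. split; [lra|]. intros u Hu.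
  have Hle := pow_le_sq u i ltac:(lra) ltac:(lia).
  have Hp : 0 <= u ^ i by apply pow_le; lra.
  have Hu2 : u ^ 2 <= / 4 by (simpl; nra).
  replace (/ (1 - u ^ i) - 1 - - 0 * u) with (u ^ i / (1 - u ^ i)) by (field; lra).
  rewrite Rabs_right.
  + unfold Rdiv. have : / (1 - u ^ i) <= 2.
    { replace 2 with (/ / 2) by (field). apply Rinv_le_contravar; lra. }
    have : 0 <= / (1 - u ^ i) by (apply Rlt_le, Rinv_0_lt_compat; lra). nra.
  + apply Rle_ge. apply Rmult_le_pos; [auto| apply Rlt_le, Rinv_0_lt_compat; lra].
Qed.

Lemma good_factor i z : (1 <= i)%coq_nat -> good (IZR z * cc i) (fun u => powerRZ (1 - u ^ i) z).
Proof.
intros Hi. destruct z as [|p|p]; simpl powerRZ.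
- eapply good_ext; [| |apply good_1]; [simpl; ring|reflexivity].
- eapply good_ext; [| |apply (good_pow _ _ (Pos.to_nat p) (good_base i Hi))]; [|reflexivity].
  rewrite INR_IPR. reflexivity.
- eapply good_ext; [| |apply (good_pow _ _ (Pos.to_nat p) (good_base_inv i Hi))].
  + rewrite INR_IPR. unfold IZR. ring.
  + intros u Hu. simpl. rewrite pow_inv. reflexivity.
Qed.

Lemma good_list (l : list nat) (z : nat -> Z) : (forall i, In i l -> (1 <= i)%coq_nat) ->
  good (Rsum l (fun i => IZR (z i) * cc i)) (fun u => Rprod l (fun i => powerRZ (1 - u ^ i) (z i))).
Proof.
induction l as [|a l IH]; intros Hl.
- eapply good_ext; [| |apply good_1]; [reflexivity|]. intros; reflexivity.
- eapply good_ext; [| |apply (good_mul _ _ _ _ (good_factor a (z a) (Hl a (or_introl erefl))) (IH ltac:(intros; apply Hl; right; auto)))].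
  + reflexivity.
  + intros; reflexivity.
Qed.

Lemma good_Fe e : good (- IZR (ecoef e 1)) (Fe e).
Proof.
eapply good_ext; [| |apply (good_list (List.seq 1 (length e)) (ecoef e))].
- destruct e as [|z e].
  + unfold Rsum, ecoef; simpl. ring.
  + change (List.seq 1 (length (z :: e))) with (1%nat :: List.seq 2 (length e)).
    change (Rsum (1%nat :: ?l) ?f) with (f 1%nat + Rsum l f).
    rewrite (Rsum_ext (List.seq 2 (length e)) _ (fun _ => 0)).
    * rewrite Rsum_0. unfold cc; simpl. ring.
    * intros i Hi. apply in_seq in Hi. unfold cc. replace (Nat.eqb i 1) with false by (symmetry; apply Nat.eqb_neq; lia). ring.
- intros; reflexivity.
- intros i Hi. apply in_seq in Hi. lia.
Qed.

Lemma ge_bound e : exists D, 0 <= D /\ forall p, (2 <= p)%coq_nat ->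
  Rabs (ge e p) <= INR (Z.abs_nat (ecoef e 1)) / INR p + D / INR p ^ 2.
Proof.
destruct (good_Fe e) as [D [HD H]]. exists D. split; auto. intros p Hp.
have Hp2 : 2 <= INR p by (replace 2 with (INR 2) by (simpl; ring); apply le_INR; lia).
have Hu : 0 < / INR p <= / 2.
{ split; [apply Rinv_0_lt_compat; lra| apply Rinv_le_contravar; lra]. }
have := H _ Hu. unfold ge, fe.
set (a := IZR (ecoef e 1)). set (F := Fe e (/ INR p)).
intros Hb.
replace (F - 1) with ((F - 1 - - a * / INR p) + (- a * / INR p)) by ring.
eapply Rle_trans; [apply Rabs_triang|].
rewrite Rabs_mult Rabs_Ropp (Rabs_right (/ INR p)); last lra.
have -> : Rabs a = INR (Z.abs_nat (ecoef e 1)).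
{ unfold a. rewrite Rabs_Zabs INR_IZR_INZ. f_equal. lia. }
rewrite pow_inv in Hb. unfold Rdiv. lra.
Qed.

Lemma ln_le' x y : 0 < x -> x <= y -> ln x <= ln y.
Proof. intros Hx [H|H]; [left; apply ln_increasing; auto| subst; lra]. Qed.

Lemma exp_le' x y : x <= y -> exp x <= exp y.
Proof. intros [H|H]; [left; apply exp_increasing; auto| subst; lra]. Qed.

Lemma ln_pos' x : 1 < x -> 0 < ln x.
Proof. intros H. rewrite <- ln_1. apply ln_increasing; lra. Qed.

Lemma ln_ge0 x : 1 <= x -> 0 <= ln x.
Proof. intros H. rewrite <- ln_1. apply ln_le'; lra. Qed.

Lemma INR_ge2 p : (2 <= p)%coq_nat -> 2 <= INR p.
Proof. intros H. replace 2 with (INR 2) by (simpl; ring). apply le_INR; lia. Qed.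

Lemma INR_ge1 p : (1 <= p)%coq_nat -> 1 <= INR p.
Proof. intros H. replace 1 with (INR 1) by (simpl; ring). apply le_INR; lia. Qed.

Lemma expn_pow a m : expn a m = Nat.pow a m.
Proof. elim: m => [|m IH] //. by rewrite expnS IH Nat.pow_succ_r'. Qed.

Lemma ln_prod (l : list nat) : Forall (fun p => (1 <= p)%coq_nat) l ->
  Rsum l (fun p => ln (INR p)) = ln (INR (fold_right Nat.mul 1%nat l)).
Proof.
induction l as [|a l IH]; intros Hl; unfold Rsum in *; simpl.
- rewrite ln_1. reflexivity.
- inversion Hl; subst. rewrite IH // mult_INR ln_mult //.
  + apply lt_0_INR; lia.
  + apply lt_0_INR. clear -H2. induction l as [|b l IH]; simpl; [lia|]. inversion H2; subst. have := IH H3. nia.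
Qed.

Lemma prod_pos (l : list nat) : Forall (fun p => (1 <= p)%coq_nat) l -> (1 <= fold_right Nat.mul 1%nat l)%coq_nat.
Proof. induction l as [|b l IH]; simpl; intros H; [lia|]. inversion H; subst. have := IH H3. nia. Qed.

Definition theta (N : nat) : R := Rsum (primes_upto N) (fun p => ln (INR p)).

Lemma primes_Forall_ge1 (l : list nat) : Forall (fun p => isprimeb p = true) l -> Forall (fun p => (1 <= p)%coq_nat) l.
Proof. intros H. eapply Forall_impl; [|apply H]. intros a Ha. have := prime_ge2 _ Ha. lia. Qed.

Lemma theta_double m : theta (Nat.add m m) <= theta m + INR m * ln 4.
Proof.
unfold theta. rewrite (primes_upto_split m (Nat.add m m)); last lia. rewrite Rsum_app.
set (l := filter isprimeb (List.seq (S m) (Nat.sub (Nat.add m m) m))).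
have Hpr : Forall (fun p => isprimeb p = true) l.
{ apply Forall_forall. intros x Hx. apply filter_In in Hx. tauto. }
rewrite (ln_prod l); last (apply primes_Forall_ge1; auto).
have Hdvd : fold_right Nat.mul 1%nat l %| 'C(m + m, m).
{ apply dvd_prod; auto.
  - apply NoDup_filter, seq_NoDup.
  - apply Forall_forall. intros x Hx. apply filter_In in Hx. destruct Hx as [Hx Hp]. apply in_seq in Hx.
    apply prime_dvd_central_bin; [apply pr_mc; auto| apply/ltP; lia| apply/leP; lia]. }
have Hle : (fold_right Nat.mul 1%nat l <= Nat.pow 4 m)%coq_nat.
{ rewrite -expn_pow. apply/leP. apply: leq_trans; [apply: dvdn_leq Hdvd|apply central_bin_le].
  by rewrite bin_gt0 leq_addr. }
have Hpos := prod_pos l (primes_Forall_ge1 l Hpr).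
have : ln (INR (fold_right Nat.mul 1%nat l)) <= ln (INR (Nat.pow 4 m)).
{ apply ln_le'; [apply lt_0_INR; lia| apply le_INR; auto]. }
intros H. rewrite pow_INR ln_pow in H; last (simpl; lra). replace (INR 4) with 4 in H by (simpl; ring). lra.
Qed.

Lemma isprimeb_0 : isprimeb 0 = false.
Proof. by rewrite isprimeb_mc. Qed.
Lemma isprimeb_1 : isprimeb 1 = false.
Proof. by rewrite isprimeb_mc. Qed.

Lemma primes_upto_S m : primes_upto (S m) = primes_upto m ++ (if isprimeb (S m) then S m :: nil else nil).
Proof. unfold primes_upto. rewrite seq_S filter_app. simpl. destruct (isprimeb (S m)); reflexivity. Qed.

Lemma theta_mono m : theta m <= theta (S m).
Proof.
unfold theta. rewrite primes_upto_S Rsum_app.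
case E: (isprimeb (S m)).
- change (Rsum (S m :: nil) (fun p => ln (INR p))) with (ln (INR (S m)) + 0).
  have := ln_ge0 (INR (S m)) (INR_ge1 (S m) ltac:(lia)). lra.
- change (Rsum nil (fun p => ln (INR p))) with 0. lra.
Qed.

Lemma ln4_pos : 0 < ln 4.
Proof. apply ln_pos'. lra. Qed.

Lemma theta_bound N : theta N <= 2 * ln 4 * INR N.
Proof.
have L4 := ln4_pos.
induction N as [N IH] using (well_founded_induction lt_wf).
destruct N as [|[|N]].
- unfold theta, primes_upto. cbn [List.seq filter]. rewrite isprimeb_0. unfold Rsum; simpl. lra.
- unfold theta, primes_upto. cbn [List.seq filter]. rewrite isprimeb_0 isprimeb_1. unfold Rsum; simpl. lra.
- destruct (Nat.Even_or_Odd (S (S N))) as [[m Hm]|[m Hm]].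
  + have Hm' : S (S N) = Nat.add m m by lia. rewrite Hm'.
    have := theta_double m. have := IH m ltac:(lia). have := pos_INR m. rewrite plus_INR. nra.
  + have Hm' : S (S N) = Nat.add m (Nat.add m 1) by lia. rewrite Hm'.
    have H1 := theta_mono (Nat.add m (Nat.add m 1)).
    have E : S (Nat.add m (Nat.add m 1)) = Nat.add (S m) (S m) by lia. rewrite E in H1.
    have := theta_double (S m). have := IH (S m) ltac:(lia).
    have Hm1 : 1 <= INR m by (apply INR_ge1; lia).
    rewrite !plus_INR !S_INR. simpl INR. nra.
Qed.

Definition Asum (N : nat) : R := Rsum (primes_upto N) (fun p => ln (INR p) / INR p).
Definition Psum (N : nat) : R := Rsum (primes_upto N) (fun p => / INR p).

Lemma Asum_bound N : (1 <= N)%coq_nat -> Asum N <= ln (INR N) + 2 * ln 4.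
Proof.
intros HN. set (L := primes_upto N).
have HLpr : Forall (fun p => isprimeb p = true) L.
{ apply Forall_forall. intros x Hx. apply In_primes_upto in Hx. tauto. }
have S1 : Rsum (List.seq 1 N) (fun n => ln (INR n)) <= INR N * ln (INR N).
{ replace (INR N * ln (INR N)) with (Rsum (List.seq 1 N) (fun _ => ln (INR N))) by (rewrite Rsum_const length_seq; ring).
  apply Rsum_le. intros n Hn. apply in_seq in Hn. apply ln_le'; [apply lt_0_INR; lia| apply le_INR; lia]. }
have S2 : Rsum (List.seq 1 N) (fun n => Rsum L (fun p => if Nat.eqb (Nat.modulo n p) 0 then ln (INR p) else 0))
          <= Rsum (List.seq 1 N) (fun n => ln (INR n)).
{ apply Rsum_le. intros n Hn. apply in_seq in Hn.
  rewrite <- (Rsum_filter (fun p => Nat.eqb (Nat.modulo n p) 0) L (fun p => ln (INR p))).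
  set (l := filter _ L).
  have Hlpr : Forall (fun p => isprimeb p = true) l.
  { apply Forall_forall. intros x Hx. apply filter_In in Hx. destruct Hx as [Hx _].
    apply In_primes_upto in Hx. tauto. }
  rewrite ln_prod; last (apply primes_Forall_ge1; auto).
  have Hd : fold_right Nat.mul 1%nat l %| n.
  { apply dvd_prod; auto.
    - apply NoDup_filter, NoDup_primes_upto.
    - apply Forall_forall. intros x Hx. apply filter_In in Hx. destruct Hx as [_ Hx].
      by rewrite -modb_dvdn. }
  have Hle : (fold_right Nat.mul 1%nat l <= n)%coq_nat by (apply/leP; apply: dvdn_leq => //; apply/ltP; lia).
  have := prod_pos l (primes_Forall_ge1 l Hlpr).
  intros; apply ln_le'; [apply lt_0_INR; lia| apply le_INR; auto]. }
rewrite Rsum_swap in S2.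
rewrite (Rsum_ext L _ (fun p => ln (INR p) * INR (cntm p N))) in S2.
2: { intros p Hp. apply Rsum_cnt. }
have S3 : Rsum L (fun p => ln (INR p) * (INR N / INR p - 1)) <= Rsum L (fun p => ln (INR p) * INR (cntm p N)).
{ apply Rsum_le. intros p Hp. apply In_primes_upto in Hp. destruct Hp as [Hp _].
  have H2 := prime_ge2 p Hp. have := cntm_real p N ltac:(lia).
  have := ln_ge0 (INR p) (INR_ge1 p ltac:(lia)). nra. }
have Eq : Rsum L (fun p => ln (INR p) * (INR N / INR p - 1)) = INR N * Asum N - theta N.
{ transitivity (Rsum L (fun p => INR N * (ln (INR p) / INR p) + (-1) * ln (INR p))).
  - apply Rsum_ext. intros p Hp. apply In_primes_upto in Hp. destruct Hp as [Hp _].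
    have := INR_ge2 p (prime_ge2 p Hp). intros. field. lra.
  - rewrite Rsum_plus !Rsum_scal. unfold Asum, theta. fold L. ring. }
have Th := theta_bound N.
have HN' : 1 <= INR N by apply INR_ge1.
have : INR N * Asum N <= INR N * (ln (INR N) + 2 * ln 4) by lra.
intros H. apply Rmult_le_reg_l in H; lra.
Qed.

Lemma ln_ratio x y : 0 < x -> x <= y -> 1 - x / y <= ln y - ln x.
Proof.
intros Hx Hy. have Hy0 : 0 < y by lra.
have := exp_ineq1_le (ln (x / y)). rewrite exp_ln; [|apply Rdiv_lt_0_compat; auto].
unfold Rdiv. rewrite ln_mult // ?ln_Rinv //; [|apply Rinv_0_lt_compat; auto]. lra.
Qed.

Definition Rf (m : nat) : R :=
  Psum m - Asum m / ln (INR m) - ln (ln (INR m)) + 2 * ln 4 / ln (INR m).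

Lemma Rf_step m : (2 <= m)%coq_nat -> Rf (S m) <= Rf m.
Proof.
intros Hm.
have Hm1 : 1 < INR m by (have := INR_ge2 m Hm; lra).
have Hlt : INR m < INR (S m) by (rewrite S_INR; lra).
set (x := ln (INR m)). set (y := ln (INR (S m))).
have Hx : 0 < x by apply ln_pos'.
have Hxy : x < y by (apply ln_increasing; lra).
have HA := Asum_bound m ltac:(lia). fold x in HA.
set (c := 2 * ln 4) in *.
have HD := ln_ratio x y Hx ltac:(lra).
have Hs : 0 < INR (S m) by lra.
have Hxy' : 0 <= / x - / y.
{ have : / y < / x by (apply Rinv_lt_contravar; nra). lra. }
have key : (Asum m - c) * (/ x - / y) <= x * (/ x - / y) by (apply Rmult_le_compat_r; lra).
have E2 : x * (/ x - / y) = 1 - x / y by (field; lra).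
have ER : Rf (S m) = Rf m + (Asum m - c) * (/ x - / y) - (ln y - ln x).
{ unfold Rf, Asum, Psum. rewrite primes_upto_S !Rsum_app. fold x y c.
  case: (isprimeb (S m)).
  - change (Rsum (S m :: nil) (fun p => / INR p)) with (/ INR (S m) + 0).
    change (Rsum (S m :: nil) (fun p => ln (INR p) / INR p)) with (ln (INR (S m)) / INR (S m) + 0).
    fold y. field. lra.
  - change (Rsum nil (fun p => / INR p)) with 0.
    change (Rsum nil (fun p => ln (INR p) / INR p)) with 0. field. lra. }
lra.
Qed.

Lemma Rf_le m : (2 <= m)%coq_nat -> Rf m <= Rf 2.
Proof.
induction m as [|m IH]; intros Hm; [lia|].
destruct (Nat.eq_dec m 1) as [->|Hne]; [lra|].
have := Rf_step m ltac:(lia). have := IH ltac:(lia). lra.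
Qed.

Lemma Psum_bound : exists K, forall N, (2 <= N)%coq_nat -> Psum N <= ln (ln (INR N)) + K.
Proof.
exists (Rf 2 + 1). intros N HN.
have := Rf_le N HN. unfold Rf.
have HN1 : 1 < INR N by (have := INR_ge2 N HN; lra).
have Hx : 0 < ln (INR N) by apply ln_pos'.
have HA := Asum_bound N ltac:(lia).
have : Asum N / ln (INR N) <= 1 + 2 * ln 4 / ln (INR N).
{ unfold Rdiv. replace (1 + 2 * ln 4 * / ln (INR N)) with ((ln (INR N) + 2 * ln 4) * / ln (INR N)) by (field; lra).
  apply Rmult_le_compat_r; [apply Rlt_le, Rinv_0_lt_compat; auto| auto]. }
lra.
Qed.

Lemma inv_sq_sum a m : (1 <= a)%coq_nat ->
  Rsum (List.seq (S a) m) (fun n => / INR n ^ 2) <= / INR a - / INR (Nat.add a m).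
Proof.
revert a. induction m as [|m IH]; intros a Ha.
- unfold Rsum; simpl. rewrite Nat.add_0_r. lra.
- change (List.seq (S a) (S m)) with (S a :: List.seq (S (S a)) m).
  change (Rsum (S a :: ?l) ?f) with (f (S a) + Rsum l f).
  have := IH (S a) ltac:(lia). replace (Nat.add (S a) m) with (Nat.add a (S m)) by lia.
  have Ha1 : 1 <= INR a by apply INR_ge1.
  rewrite S_INR.
  have : / (INR a + 1) ^ 2 <= / INR a - / (INR a + 1).
  { replace (/ INR a - / (INR a + 1)) with (/ (INR a * (INR a + 1))) by (field; lra).
    apply Rinv_le_contravar; [nra| simpl; nra]. }
  lra.
Qed.

Lemma Rinv_nonneg x : 0 <= x -> 0 <= / x.
Proof. intros [H|<-]; [apply Rlt_le, Rinv_0_lt_compat; auto| rewrite Rinv_0; lra]. Qed.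

Lemma sq_nonneg_f n : 0 <= / INR n ^ 2.
Proof. apply Rinv_nonneg. apply pow_le, pos_INR. Qed.

Lemma sq_sum_all N : Rsum (primes_upto N) (fun p => / INR p ^ 2) <= 2.
Proof.
eapply Rle_trans; [apply Rsum_filter_le; intros; apply sq_nonneg_f|].
change (List.seq 0 (S N)) with (0%nat :: List.seq 1 N).
change (Rsum (0%nat :: ?l) ?f) with (f 0%nat + Rsum l f). cbv beta.
simpl INR. replace (/ 0 ^ 2) with 0 by (simpl; rewrite Rmult_0_l Rinv_0; reflexivity).
destruct N as [|N]; [unfold Rsum; simpl; lra|].
change (List.seq 1 (S N)) with (1%nat :: List.seq 2 N).
change (Rsum (1%nat :: ?l) ?f) with (f 1%nat + Rsum l f). cbv beta.
have := inv_sq_sum 1 N ltac:(lia).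
have := Rinv_nonneg (INR (Nat.add 1 N)) (pos_INR _).
simpl INR. replace (/ (1 ^ 2)) with 1 by (simpl; field). rewrite Rinv_1. lra.
Qed.

Lemma sq_sum_tail N M : (1 <= N)%coq_nat ->
  Rsum (filter isprimeb (List.seq (S N) (Nat.sub M N))) (fun p => / INR p ^ 2) <= / INR N.
Proof.
intros HN. eapply Rle_trans; [apply Rsum_filter_le; intros; apply sq_nonneg_f|].
have := inv_sq_sum N (Nat.sub M N) HN. have := Rinv_nonneg (INR (Nat.add N (Nat.sub M N))) (pos_INR _). lra.
Qed.

Lemma exp_sub1 t : 0 <= t -> exp t - 1 <= t * exp t.
Proof.
intros Ht. have := exp_ineq1_le (- t). intros H.
have He : 0 < exp t by apply exp_pos.
have : exp (- t) * exp t = 1 by (rewrite <- exp_plus; replace (- t + t) with 0 by ring; apply exp_0).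
nra.
Qed.

Lemma Rprod_1abs_exp (l : list nat) x : Rprod l (fun p => 1 + Rabs (x p)) <= exp (Rsum l (fun p => Rabs (x p))).
Proof.
rewrite <- Rprod_exp. apply Rprod_le. intros p _. split.
- have := Rabs_pos (x p). lra.
- apply exp_ineq1_le.
Qed.

Lemma abs_from_dev P Q : Rabs (P - 1) <= Q - 1 -> Rabs P <= Q.
Proof. intros H. have := Rabs_triang (P - 1) 1. replace (P - 1 + 1) with P by ring. rewrite Rabs_R1. lra. Qed.

Section Conv.
Variable a : nat -> R.
Variable B : R.
Hypothesis HB : 0 <= B.
Hypothesis Ha : forall p, isprimeb p = true -> Rabs (a p) <= B / INR p ^ 2.
Hypothesis Hpos : forall p, isprimeb p = true -> 0 < 1 + a p.

Definition sp (N : nat) : R := Rprod (primes_upto N) (fun p => 1 + a p).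

Lemma sum_abs_le (l : list nat) : Forall (fun p => isprimeb p = true) l ->
  Rsum l (fun p => Rabs (a p)) <= B * Rsum l (fun p => / INR p ^ 2).
Proof.
intros Hl. rewrite <- Rsum_scal. apply Rsum_le. intros p Hp.
have := Ha p (proj1 (Forall_forall _ l) Hl p Hp). unfold Rdiv. lra.
Qed.

Lemma primes_Forall N : Forall (fun p => isprimeb p = true) (primes_upto N).
Proof. apply Forall_forall. intros x Hx. apply In_primes_upto in Hx. tauto. Qed.

Lemma tail_Forall N M : Forall (fun p => isprimeb p = true) (filter isprimeb (List.seq (S N) (Nat.sub M N))).
Proof. apply Forall_forall. intros x Hx. apply filter_In in Hx. tauto. Qed.

Lemma sp_abs N : Rabs (sp N) <= exp (2 * B).
Proof.
unfold sp. have := Rprod_dev (primes_upto N) a.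
have := Rprod_1abs_exp (primes_upto N) a.
have := sum_abs_le _ (primes_Forall N). have := sq_sum_all N.
intros H1 H2 H3 H4.
have : exp (Rsum (primes_upto N) (fun p => Rabs (a p))) <= exp (2 * B) by (apply exp_le'; nra).
have : Rabs (Rprod (primes_upto N) (fun p => 1 + a p)) <= Rprod (primes_upto N) (fun p => 1 + Rabs (a p)).
{ apply abs_from_dev. auto. }
lra.
Qed.

Lemma tail_dev N M : (1 <= N)%coq_nat ->
  Rabs (Rprod (filter isprimeb (List.seq (S N) (Nat.sub M N))) (fun p => 1 + a p) - 1) <= exp (B / INR N) - 1.
Proof.
intros HN. set (l := filter isprimeb (List.seq (S N) (Nat.sub M N))).
eapply Rle_trans; [apply Rprod_dev|].
have := Rprod_1abs_exp l a. have := sum_abs_le l (tail_Forall N M). have := sq_sum_tail N M HN.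
intros H1 H2 H3.
have : exp (Rsum l (fun p => Rabs (a p))) <= exp (B / INR N).
{ apply exp_le'. unfold Rdiv. fold l in H1. nra. }
lra.
Qed.

Lemma sp_split N M : (N <= M)%coq_nat ->
  sp M = sp N * Rprod (filter isprimeb (List.seq (S N) (Nat.sub M N))) (fun p => 1 + a p).
Proof. intros H. unfold sp. rewrite (primes_upto_split N M) // Rprod_app. reflexivity. Qed.

Definition K1 := exp (3 * B) * B.

Lemma sp_cauchy_bound N M : (1 <= N)%coq_nat -> (N <= M)%coq_nat -> Rabs (sp M - sp N) <= K1 / INR N.
Proof.
intros HN HM. rewrite (sp_split N M HM).
set (T := Rprod _ _).
replace (sp N * T - sp N) with (sp N * (T - 1)) by ring. rewrite Rabs_mult.
have H1 := sp_abs N. have H2 := tail_dev N M HN. fold T in H2.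
have HN1 : 1 <= INR N by apply INR_ge1.
have Ht : 0 <= B / INR N by (apply Rmult_le_pos; [auto| apply Rlt_le, Rinv_0_lt_compat; lra]).
have Hi1 : / INR N <= 1 by (rewrite <- Rinv_1; apply Rinv_le_contravar; lra).
have Ht1 : B / INR N <= B by (unfold Rdiv; nra).
have H3 := exp_sub1 (B / INR N) Ht.
have H4 : exp (B / INR N) <= exp B by apply exp_le'.
have H5 : Rabs (T - 1) <= B / INR N * exp B.
{ have := exp_pos (B / INR N). nra. }
have H6 : Rabs (sp N) * Rabs (T - 1) <= exp (2 * B) * (B / INR N * exp B).
{ apply Rmult_le_compat; auto; apply Rabs_pos. }
unfold K1. replace (exp (3 * B)) with (exp (2 * B) * exp B) by (rewrite <- exp_plus; f_equal; ring).
unfold Rdiv in *. nra.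
Qed.

Lemma K1_nonneg : 0 <= K1.
Proof. unfold K1. have := exp_pos (3 * B). nra. Qed.

Lemma sp_cauchy : Cauchy_crit sp.
Proof.
intros eps Heps. have HK := K1_nonneg.
destruct (archimed_cor1 (eps / (K1 + 1))) as [N0 [HN0 HN0pos]].
{ apply Rdiv_lt_0_compat; lra. }
exists N0. intros n m Hn Hm. unfold R_dist.
have HN0' : 1 <= INR N0 by (apply INR_ge1; lia).
have key : forall n m, (N0 <= n)%coq_nat -> (n <= m)%coq_nat -> Rabs (sp m - sp n) < eps.
{ intros n' m' Hn' Hnm. eapply Rle_lt_trans; [apply sp_cauchy_bound; lia|].
  have Hn1 : INR N0 <= INR n' by (apply le_INR; lia).
  have : / INR n' <= / INR N0 by (apply Rinv_le_contravar; lra).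
  have : eps / (K1 + 1) * (K1 + 1) = eps by (field; lra).
  have : 0 < / INR N0 by (apply Rinv_0_lt_compat; lra).
  unfold Rdiv in *. nra. }
destruct (Nat.le_ge_cases n m) as [H|H].
- rewrite Rabs_minus_sym. apply (key n m); lia.
- apply (key m n); lia.
Qed.

Lemma sp_conv : exists S, Un_cv sp S /\ 0 < S /\
  forall N, (1 <= N)%coq_nat -> Rabs (sp N - S) <= K1 / INR N.
Proof.
destruct (R_complete sp sp_cauchy) as [S HS].
have Hbd : forall N, (1 <= N)%coq_nat -> Rabs (sp N - S) <= K1 / INR N.
{ intros N HN. apply le_epsilon. intros eps Heps.
  destruct (HS eps Heps) as [M0 HM0].
  have H1 := HM0 (Nat.max M0 N) ltac:(lia). unfold R_dist in H1.
  have H2 := sp_cauchy_bound N (Nat.max M0 N) HN ltac:(lia).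
  have := Rabs_triang (sp N - sp (Nat.max M0 N)) (sp (Nat.max M0 N) - S).
  replace (sp N - sp (Nat.max M0 N) + (sp (Nat.max M0 N) - S)) with (sp N - S) by ring.
  rewrite Rabs_minus_sym in H2. lra. }
exists S. split; [auto|split; [|auto]].
destruct (archimed_cor1 (/ (8 * B + 1))) as [N1 [HN1 HN1pos]].
{ apply Rinv_0_lt_compat; lra. }
have HN1' : 1 <= INR N1 by (apply INR_ge1; lia).
have Hsmall : B / INR N1 <= / 8.
{ have E : / (8 * B + 1) * (8 * B + 1) = 1 by (field; lra).
  have : / INR N1 * (8 * B + 1) < / (8 * B + 1) * (8 * B + 1) by (apply Rmult_lt_compat_r; lra).
  rewrite E.
  have : 0 < / INR N1 by (apply Rinv_0_lt_compat; lra).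
  unfold Rdiv. nra. }
have Hpos1 : 0 < sp N1.
{ unfold sp. apply Rprod_pos. intros p Hp. apply Hpos. apply In_primes_upto in Hp. tauto. }
have Hge : forall M, (N1 <= M)%coq_nat -> 5 / 8 * sp N1 <= sp M.
{ intros M HM. rewrite (sp_split N1 M HM).
  have H1 := tail_dev N1 M ltac:(lia).
  set (T := Rprod _ _) in *.
  have Ht : 0 <= B / INR N1 by (apply Rmult_le_pos; [auto| apply Rlt_le, Rinv_0_lt_compat; lra]).
  have H3 := exp_sub1 (B / INR N1) Ht.
  have H4 : exp (B / INR N1) <= 3.
  { eapply Rle_trans; [apply exp_le'|apply exp_le_3]. lra. }
  have : T - 1 >= - (3 / 8).
  { have := Rabs_pos (T - 1). have := Rle_abs (- (T - 1)). rewrite Rabs_Ropp.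
    have := exp_pos (B / INR N1). nra. }
  nra. }
apply Rlt_le_trans with (5 / 8 * sp N1); [lra|].
apply le_epsilon. intros eps Heps.
destruct (HS eps Heps) as [M0 HM0].
have H1 := HM0 (Nat.max M0 N1) ltac:(lia). unfold R_dist in H1.
have H2 := Hge (Nat.max M0 N1) ltac:(lia).
have := Rle_abs (sp (Nat.max M0 N1) - S). lra.
Qed.
End Conv.

Lemma primelist_upto N : primelist (primes_upto N).
Proof. apply Forall_forall. intros x Hx. apply In_primes_upto in Hx. tauto. Qed.

Lemma jtq_expand e N n : weight e = 0%Z -> (1 <= n)%coq_nat -> (n <= N)%coq_nat ->
  jtq e n = Rsum (subs (ge e) (primes_upto N)) (fun dw => if Nat.eqb (Nat.modulo n (fst dw)) 0 then snd dw else 0).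
Proof.
intros Hw H1 H2. rewrite jtq_eq // (prime_divisors_filter n N) // Rprod_filter.
rewrite <- subs_expand; [|apply primelist_upto|apply NoDup_primes_upto].
apply Rprod_ext. intros p _. unfold ge. case: (Nat.eqb _ _); ring.
Qed.

Lemma jtq_sum_eq e N : weight e = 0%Z ->
  jtq_sum e N = Rsum (subs (ge e) (primes_upto N)) (fun dw => snd dw * INR (cntm (fst dw) N)).
Proof.
intros Hw. change (jtq_sum e N) with (Rsum (List.seq 1 N) (jtq e)).
rewrite (Rsum_ext _ _ (fun n => Rsum (subs (ge e) (primes_upto N)) (fun dw => if Nat.eqb (Nat.modulo n (fst dw)) 0 then snd dw else 0))).
- rewrite Rsum_swap. apply Rsum_ext. intros dw _. apply Rsum_cnt.
- intros n Hn. apply in_seq in Hn. apply jtq_expand; auto; lia.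
Qed.

Lemma sing_partial_eq e N : weight e = 0%Z ->
  sing_partial e N = Rsum (subs (ge e) (primes_upto N)) (fun dw => snd dw / INR (fst dw)).
Proof.
intros Hw. unfold sing_partial. rewrite subs_div; [|apply primelist_upto].
apply Rprod_ext. intros p Hp. apply In_primes_upto in Hp. apply sing_factor_eq; tauto.
Qed.

Lemma error_main e N : weight e = 0%Z ->
  Rabs (jtq_sum e N - INR N * sing_partial e N) <= Rprod (primes_upto N) (fun p => 1 + Rabs (ge e p)).
Proof.
intros Hw. rewrite jtq_sum_eq // sing_partial_eq // -subs_abs.
set (l := subs (ge e) (primes_upto N)).
have -> : Rsum l (fun dw => snd dw * INR (cntm (fst dw) N)) - INR N * Rsum l (fun dw => snd dw / INR (fst dw)) =
  Rsum l (fun dw => snd dw * INR (cntm (fst dw) N) + -1 * (INR N * (snd dw / INR (fst dw)))).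
{ rewrite Rsum_plus !Rsum_scal. ring. }
eapply Rle_trans; [apply Rsum_abs|]. apply Rsum_le. intros dw Hin.
have Hd := subs_pos (ge e) _ (primelist_upto N) dw Hin.
have := cntm_real (fst dw) N Hd.
have Hd' : 0 < INR (fst dw) by (apply lt_0_INR; lia).
intros Hc.
replace (snd dw * INR (cntm (fst dw) N) + -1 * (INR N * (snd dw / INR (fst dw))))
  with (snd dw * (INR (cntm (fst dw) N) - INR N / INR (fst dw))) by (field; lra).
rewrite Rabs_mult.
have : Rabs (INR (cntm (fst dw) N) - INR N / INR (fst dw)) <= 1.
{ apply Rabs_le. lra. }
have := Rabs_pos (snd dw). nra.
Qed.

Lemma prod_bound e D K N : 0 <= D -> (2 <= N)%coq_nat ->
  (forall p, (2 <= p)%coq_nat -> Rabs (ge e p) <= INR (Z.abs_nat (ecoef e 1)) / INR p + D / INR p ^ 2) ->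
  Psum N <= ln (ln (INR N)) + K ->
  Rprod (primes_upto N) (fun p => 1 + Rabs (ge e p)) <=
  exp (INR (Z.abs_nat (ecoef e 1)) * K + 2 * D) * ln (INR N) ^ (Z.abs_nat (ecoef e 1)).
Proof.
intros HD HN Hg HP. set (kk := Z.abs_nat (ecoef e 1)) in *. set (k := INR kk).
have Hk : 0 <= k by apply pos_INR.
eapply Rle_trans.
{ apply (Rprod_le _ _ (fun p => exp (k / INR p + D / INR p ^ 2))).
  intros p Hp. apply In_primes_upto in Hp. destruct Hp as [Hp _].
  have := Hg p (prime_ge2 p Hp). have := Rabs_pos (ge e p).
  have := exp_ineq1_le (k / INR p + D / INR p ^ 2). fold k. lra. }
rewrite Rprod_exp.
have Hs : Rsum (primes_upto N) (fun p => k / INR p + D / INR p ^ 2) = k * Psum N + D * Rsum (primes_upto N) (fun p => / INR p ^ 2).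
{ rewrite Rsum_plus. unfold Rdiv. rewrite !Rsum_scal. reflexivity. }
rewrite Hs.
have Q := sq_sum_all N.
have HN1 : 1 < INR N by (have := INR_ge2 N HN; lra).
have HlnN : 0 < ln (INR N) by apply ln_pos'.
have E : ln (INR N) ^ kk = exp (k * ln (ln (INR N))).
{ rewrite <- Rpower_pow; auto. }
rewrite E -exp_plus. apply exp_le'. nra.
Qed.

Theorem theorem2 (e : list Z) :
  weight e = 0%Z ->
  exists S : R,
    Un_cv (sing_partial e) S /\ 0 < S /\
    exists C : R, forall (x : R) (N : nat),
      2 <= x -> INR N <= x < INR N + 1 ->
      Rabs (jtq_sum e N - S * x) <= C * (ln x) ^ (Z.abs_nat (ecoef e 1)).
Proof.
intros Hw.
destruct (ge_bound e) as [D [HD Hg]].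
destruct Psum_bound as [K HK].
set (kk := Z.abs_nat (ecoef e 1)) in *.
set (B := INR kk + D).
set (a := fun p => ge e p / INR p).
have HB : 0 <= B by (have := pos_INR kk; unfold B; lra).
have Ha : forall p, isprimeb p = true -> Rabs (a p) <= B / INR p ^ 2.
{ intros p Hp. have H2 := prime_ge2 p Hp. have Hp2 := INR_ge2 p H2.
  have := Hg p H2. unfold a, B. unfold Rdiv at 1. rewrite Rabs_mult Rabs_inv (Rabs_right (INR p)); last lra.
  intros H. unfold Rdiv in *.
  have Hip : 0 < / INR p by (apply Rinv_0_lt_compat; lra).
  have Hip1 : / INR p <= 1 by (rewrite <- Rinv_1; apply Rinv_le_contravar; lra).
  have E1 : / INR p ^ 2 = / INR p * / INR p by (simpl; field; lra).
  rewrite E1 in H *. set (t := / INR p) in *.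
  have H3 : Rabs (ge e p) * t <= (INR kk * t + D * (t * t)) * t by (apply Rmult_le_compat_r; lra).
  have H4 : D * (t * t) * t <= D * (t * t) * 1 by (apply Rmult_le_compat_l; [apply Rmult_le_pos; nra|lra]).
  nra. }
have Hpos : forall p, isprimeb p = true -> 0 < 1 + a p.
{ intros p Hp. have H2 := prime_ge2 p Hp. have Hp2 := INR_ge2 p H2. have := fe_pos e p H2.
  unfold a, ge. intros Hf. replace (1 + (fe e p - 1) / INR p) with ((fe e p + (INR p - 1)) / INR p) by (field; lra).
  apply Rdiv_lt_0_compat; lra. }
have Hsp : forall N, sing_partial e N = sp a N.
{ intros N. unfold sing_partial, sp. apply Rprod_ext. intros p Hp. apply In_primes_upto in Hp.
  unfold a. apply sing_factor_eq; tauto. }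
destruct (sp_conv a B HB Ha Hpos) as [S [Hcv [HSpos HSbd]]].
exists S. split.
{ intros eps Heps. destruct (Hcv eps Heps) as [N0 HN0]. exists N0. intros n Hn. rewrite Hsp. auto. }
split; auto.
set (KK := K1 B).
have HKK : 0 <= KK by apply K1_nonneg.
have Hln2 : 0 < ln 2 by apply ln_pos'; lra.
have Hl2k : 0 < ln 2 ^ kk by apply pow_lt.
exists (exp (INR kk * K + 2 * D) + (KK + S) / ln 2 ^ kk).
intros x N Hx [HN1 HN2].
have HN : (2 <= N)%coq_nat.
{ have : 1 < INR N by lra. intros H. destruct N as [|[|N]]; [simpl in H; lra|simpl in H; lra|lia]. }
have HNr : 2 <= INR N by apply INR_ge2.
have Hlnx : ln (INR N) <= ln x by (apply ln_le'; lra).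
have HlnN : 0 < ln (INR N) by apply ln_pos'; lra.
have Hpx : ln (INR N) ^ kk <= ln x ^ kk by (apply pow_incr; lra).
have Hp2x : ln 2 ^ kk <= ln x ^ kk by (apply pow_incr; split; [lra| apply ln_le'; lra]).
have E1 := error_main e N Hw.
have E2 := prod_bound e D K N HD HN Hg (HK N HN). fold kk in E2.
have E3 := HSbd N ltac:(lia). rewrite <- Hsp in E3. fold KK in E3.
have E4 : Rabs (INR N * sing_partial e N - S * x) <= KK + S.
{ replace (INR N * sing_partial e N - S * x) with (INR N * (sing_partial e N - S) + S * (INR N - x)) by ring.
  eapply Rle_trans; [apply Rabs_triang|]. rewrite !Rabs_mult.
  rewrite (Rabs_right (INR N)); [|lra]. rewrite (Rabs_right S); [|lra].
  have : INR N * Rabs (sing_partial e N - S) <= KK.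
  { replace KK with (INR N * (KK / INR N)) by (field; lra). apply Rmult_le_compat_l; lra. }
  have : Rabs (INR N - x) <= 1 by (apply Rabs_le; lra).
  nra. }
have E5 : Rabs (jtq_sum e N - S * x) <= Rabs (jtq_sum e N - INR N * sing_partial e N) + Rabs (INR N * sing_partial e N - S * x).
{ replace (jtq_sum e N - S * x) with ((jtq_sum e N - INR N * sing_partial e N) + (INR N * sing_partial e N - S * x)) by ring.
  apply Rabs_triang. }
have E6 : KK + S <= (KK + S) / ln 2 ^ kk * ln x ^ kk.
{ replace (KK + S) with ((KK + S) / ln 2 ^ kk * ln 2 ^ kk) at 1 by (field; lra).
  apply Rmult_le_compat_l; [|auto]. apply Rmult_le_pos; [lra| apply Rlt_le, Rinv_0_lt_compat; auto]. }
have := exp_pos (INR kk * K + 2 * D).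
nra.
Qed.
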